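(* A strategy of the chair is regret-free if and only if it never misses an opportunity and never takes a risk.
   Context: Let $\mathcal{X}$ be a finite set of alternatives. A proto-ranking is an irreflexive and transitive binary relation on $\mathcal{X}$; a ranking is a total proto-ranking; a tournament is a total and asymmetric binary relation on $\mathcal{X}$. The chair has a fixed preference $\succ$, a ranking on $\mathcal{X}$. Interaction: given a tournament $\mathrel{W}$, set $R_0=\varnothing$. In each period $t\geq1$ in which $R_{t-1}$ is not total, the chair offers a pair $\{x,y\}$ of distinct alternatives unranked by $R_{t-1}$; the winner is $x$ if $x\mathrel{W}y$ and $y$ otherwise, and $R_t$ is the transitive closure of $R_{t-1}\cup\{(\text{winner},\text{loser})\}$, stopping when $R_t$ is total. A history is a finite sequence of (winner, loser) pairs that can arise this way; terminal if its induced proto-ranking is total. A strategy assigns to each non-terminal history a pair unranked at that history. The outcome of $\sigma$ under $\mathrel{W}$ is the final ranking. A non-terminal history is on the path of $\sigma$ if it is generated by $\sigma$ and some tournament. A ranking is $\mathrel{W}$-feasible if it is the outcome under $\mathrel{W}$ of some strategy. $R$ is more aligned with $\succ$ than $R'$ if for all $x\succ y$, $xR'y$ implies $xRy$. A ranking is $\mathrel{W}$-unimprovable if no other $\mathrel{W}$-feasible ranking is more aligned with $\succ$. A strategy is regret-free if for every tournament $\mathrel{W}$ its outcome under $\mathrel{W}$ is $\mathrel{W}$-unimprovable. Errors: let $R$ be a non-total proto-ranking and $x\succ y$ alternatives unranked by $R$. Offering $\{x,y\}$ misses an opportunity at $R$ if there is $z$ with $x\succ z\succ y$ and neither $yRz$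 nor $zRx$. Offering $\{x,y\}$ takes a risk at $R$ if there is $z$ with either (a) $z\succ y$, $xRz$ and not $yRz$, or (b) $x\succ z$, $zRy$ and not $zRx$. A strategy never misses an opportunity (never takes a risk) if at no history on its path does the pair it offers miss an opportunity (take a risk) at the current proto-ranking. *)

(* Defs.v *)
From mathcomp Require Import all_boot.
Set Implicit Arguments. Unset Strict Implicit. Unset Printing Implicit Defensive.

Section Chair.
Variable X : finType.

Definition irreflexive_rel (R : rel X) := forall x, ~~ R x x.
Definition transitive_rel (R : rel X) := forall x y z, R x y -> R y z -> R x z.
Definition total_rel (R : rel X) := forall x y, x != y -> R x y || R y x.
Definition asymmetric_rel (R : rel X) := forall x y, R x y -> ~~ R y x.

Definition proto_ranking (R : rel X) := irreflexive_rel R /\ transitive_rel R.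
Definition ranking (R : rel X) := proto_ranking R /\ total_rel R.
Definition tournament (W : rel X) := total_rel W /\ asymmetric_rel W.

Definition totalb (R : rel X) : bool :=
  [forall x, forall y, (x != y) ==> (R x y || R y x)].

Definition unranked (R : rel X) (x y : X) : bool :=
  [&& x != y, ~~ R x y & ~~ R y x].

Definition tclos (e : rel X) : rel X :=
  fun x y => [exists z, e x z && connect e z y].

(* a history is a sequence of (winner, loser) pairs *)
Definition history := seq (X * X).

Definition add_pair (R : rel X) (p : X * X) : rel X :=
  tclos (fun x y => R x y || ((x == p.1) && (y == p.2))).

Definition histrel (h : history) : rel X :=
  foldl add_pair (fun _ _ => false) h.

Definition terminal (h : history) : bool := totalb (histrel h).

Definition winloss (W : rel X) (p : X * X) : X * X :=
  if W p.1 p.2 then p else (p.2, p.1).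

Definition valid_history (h : history) : Prop :=
  exists W, tournament W /\
    forall h1 p h2, h = h1 ++ p :: h2 ->
      [/\ ~~ terminal h1, unranked (histrel h1) p.1 p.2 & W p.1 p.2].

(* strategies: functions on histories, required to offer an unranked pair at
   every non-terminal history (values elsewhere are irrelevant) *)
Definition is_strategy (sigma : history -> X * X) : Prop :=
  forall h, valid_history h -> ~~ terminal h ->
    unranked (histrel h) (sigma h).1 (sigma h).2.

Fixpoint play (sigma : history -> X * X) (W : rel X) (n : nat) : history :=
  match n with
  | 0 => [::]
  | n'.+1 => let h := play sigma W n' in
             if terminal h then h else rcons h (winloss W (sigma h))
  end.

(* each period ranks a new pair, so #|X| * #|X| periods suffice to terminate *)
Definition outcome (sigma : history -> X * X) (W : rel X) : rel X :=
  histrel (play sigma W (#|X| * #|X|)).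

Definition feasible (W : rel X) (R : rel X) : Prop :=
  exists sigma, is_strategy sigma /\ outcome sigma W =2 R.

Definition more_aligned (pref : rel X) (R R' : rel X) : Prop :=
  forall x y, pref x y -> R' x y -> R x y.

Definition unimprovable (pref W : rel X) (R : rel X) : Prop :=
  forall R', feasible W R' -> ranking R' -> more_aligned pref R' R -> R' =2 R.

Definition regret_free (pref : rel X) (sigma : history -> X * X) : Prop :=
  forall W, tournament W -> unimprovable pref W (outcome sigma W).

Definition orient (pref : rel X) (p : X * X) : X * X :=
  if pref p.1 p.2 then p else (p.2, p.1).

Definition misses_opportunity (pref R : rel X) (p : X * X) : Prop :=
  let x := (orient pref p).1 in let y := (orient pref p).2 in
  exists z, [&& pref x z, pref z y, ~~ R y z & ~~ R z x].

Definition takes_risk (pref R : rel X) (p : X * X) : Prop :=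
  let x := (orient pref p).1 in let y := (orient pref p).2 in
  exists z, [&& pref z y, R x z & ~~ R y z] || [&& pref x z, R z y & ~~ R z x].

Definition on_path (sigma : history -> X * X) (h : history) : Prop :=
  ~~ terminal h /\ exists W, tournament W /\ exists n, play sigma W n = h.

Definition never_misses (pref : rel X) (sigma : history -> X * X) : Prop :=
  forall h, on_path sigma h -> ~ misses_opportunity pref (histrel h) (sigma h).

Definition never_risks (pref : rel X) (sigma : history -> X * X) : Prop :=
  forall h, on_path sigma h -> ~ takes_risk pref (histrel h) (sigma h).

End Chair.

(* Main.v *)
From Pilot Require Import Defs.
From mathcomp Require Import all_boot.
Set Implicit Arguments. Unset Strict Implicit. Unset Printing Implicit Defensive.

Section Proof.
Variable X : finType.
Implicit Types (R T S W e pref : rel X) (h : history X).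
Local Notation add_pair := Pilot.Defs.add_pair.

Lemma tclos_sub e T : (forall a b, e a b -> T a b) -> transitive_rel T ->
  forall a b, tclos e a b -> T a b.
Proof.
move=> eT Ttr a b /existsP [z /andP [eaz /connectP [p pth ->]]].
have : T a z by exact: eT.
elim: p z pth {eaz} => [|c p IH] z //= /andP [ezc pth] Taz.
apply: IH pth _; exact: Ttr Taz (eT _ _ ezc).
Qed.

Lemma tclos_e e a b : e a b -> tclos e a b.
Proof. by move=> eab; apply/existsP; exists b; rewrite eab connect0. Qed.

Lemma tclos_trans e : transitive_rel (tclos e).
Proof.
move=> a b c /existsP [z1 /andP [e1 c1]] /existsP [z2 /andP [e2 c2]].
apply/existsP; exists z1; rewrite e1 /=.
apply: connect_trans c1 _; apply: connect_trans _ c2; exact: connect1.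
Qed.

Definition rq R a b := (a == b) || R a b.

Lemma add_pairE R w l : transitive_rel R -> forall a b,
  add_pair R (w, l) a b = R a b || (rq R a w && rq R l b).
Proof.
move=> Rtr a b; apply/idP/idP.
- apply: (tclos_sub (T := fun a b => R a b || (rq R a w && rq R l b))) => [u v /=|].
    case/orP => [->//|/andP [/eqP -> /eqP ->]].
    by rewrite /rq !eqxx orbT.
  move=> u v t /orP [Ruv|/andP [Huw Hlv]] /orP [Rvt|/andP [Hvw Hlt]].
  + by rewrite (Rtr _ _ _ Ruv Rvt).
  + apply/orP; right; rewrite Hlt andbT /rq.
    case/orP: Hvw => [/eqP <-|Rvw]; first by rewrite Ruv orbT.
    by rewrite (Rtr _ _ _ Ruv Rvw) orbT.
  + apply/orP; right; rewrite Huw /= /rq.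
    case/orP: Hlv => [/eqP ->|Rlv]; first by rewrite Rvt orbT.
    by rewrite (Rtr _ _ _ Rlv Rvt) orbT.
  + by rewrite Huw Hlt orbT.
- have e1 : forall u v, R u v -> add_pair R (w, l) u v.
    by move=> u v Ruv; apply: tclos_e; rewrite /= Ruv.
  have ewl : add_pair R (w, l) w l by apply: tclos_e; rewrite /= !eqxx orbT.
  case/orP => [/e1 //|/andP [Haw Hlb]].
  have Haw' : add_pair R (w, l) a l.
    case/orP: Haw => [/eqP ->//|/e1 Raw]; exact: tclos_trans Raw ewl.
  case/orP: Hlb => [/eqP <-//|/e1 Rlb]; exact: tclos_trans Haw' Rlb.
Qed.

Lemma add_pair_trans R p : transitive_rel (add_pair R p).
Proof. exact: tclos_trans. Qed.

Lemma add_pair_sub R p a b : R a b -> add_pair R p a b.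
Proof. by move=> Rab; apply: tclos_e; rewrite /= Rab. Qed.

Lemma add_pair_new R p : add_pair R p p.1 p.2.
Proof. by apply: tclos_e; rewrite /= !eqxx orbT. Qed.

Lemma histrel_rcons h p : histrel (rcons h p) = add_pair (histrel h) p.
Proof. by rewrite /histrel foldl_rcons. Qed.

Lemma histrel_trans h : transitive_rel (histrel h).
Proof.
elim/last_ind: h => [|h p _]; first by [].
rewrite histrel_rcons; exact: add_pair_trans.
Qed.

Lemma histrel_sub h S : transitive_rel S -> (forall q, q \in h -> S q.1 q.2) ->
  forall a b, histrel h a b -> S a b.
Proof.
move=> Str; elim/last_ind: h => [|h p IH] Hin a b; first by [].
rewrite histrel_rcons; apply: tclos_sub a b => // u v /orP [Huv|/andP [/eqP -> /eqP ->]].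
- by apply: IH Huv => q qh; apply: Hin; rewrite mem_rcons inE qh orbT.
- by apply: Hin; rewrite mem_rcons inE eqxx.
Qed.

Lemma add_pair_irr R w l : proto_ranking R -> unranked R w l ->
  irreflexive_rel (add_pair R (w, l)).
Proof.
move=> [Rirr Rtr] /and3P [wl nwl nlw] a; rewrite add_pairE //.
rewrite (negbTE (Rirr a)) /= /rq.
apply/negP => /andP [/orP [/eqP Eaw|Raw] /orP [/eqP Ela|Rla]].
- by move: wl; rewrite -Eaw Ela eqxx.
- by move: nlw; rewrite -Eaw Rla.
- by move: nlw; rewrite Ela Raw.
- by move: nlw; rewrite (Rtr _ _ _ Rla Raw).
Qed.


Lemma unranked_sym R a b : unranked R a b = unranked R b a.
Proof. by rewrite /unranked eq_sym [~~ R a b && _]andbC. Qed.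

Definition vh W h := forall h1 p h2, h = h1 ++ p :: h2 ->
  [/\ ~~ terminal h1, unranked (histrel h1) p.1 p.2 & W p.1 p.2].

Lemma rcons_split (h : seq (X * X)) q (h1 : seq (X * X)) p (h2 : seq (X * X)) : rcons h q = h1 ++ p :: h2 ->
  (h1 = h /\ p = q) \/ exists h2', h = h1 ++ p :: h2'.
Proof.
case/lastP: h2 => [|h2 r].
- by rewrite cats1 => /rcons_inj [-> ->]; left.
- by rewrite -rcons_cons -rcons_cat => /rcons_inj [-> _]; right; exists h2.
Qed.

Section Play.
Variable sigma : history X -> X * X.
Variable W : rel X.
Hypothesis Hs : is_strategy sigma.
Hypothesis HW : tournament W.

Local Notation play := (play sigma W).

Lemma playS n : play n.+1 =
  if terminal (play n) then play n else rcons (play n) (winloss W (sigma (play n))).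
Proof. by []. Qed.

Lemma winloss_cases p : winloss W p = p \/ winloss W p = (p.2, p.1).
Proof. by rewrite /winloss; case: ifP; auto. Qed.

Lemma winloss_W p : p.1 != p.2 -> W (winloss W p).1 (winloss W p).2.
Proof.
case: HW => Wt Wa d; rewrite /winloss; case: ifP => //= Hn.
by move: (Wt _ _ d); rewrite Hn.
Qed.

Lemma winloss_unr R p : unranked R p.1 p.2 ->
  unranked R (winloss W p).1 (winloss W p).2.
Proof. by rewrite /winloss; case: ifP => //= _; rewrite unranked_sym. Qed.

Lemma play_inv n : vh W (play n) /\ irreflexive_rel (histrel (play n)).
Proof.
elim: n => [|n [IHv IHi]].
  by split => [h1 p h2 /(f_equal size)|a]; rewrite //= size_cat /= addnS.
rewrite playS; case: ifP => Ht; first by [].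
have unr : unranked (histrel (play n)) (sigma (play n)).1 (sigma (play n)).2.
  by apply: Hs; [exists W | rewrite Ht].
have unr' := winloss_unr unr.
split.
- move=> h1 p h2 /rcons_split [[-> ->]|[h2' E]]; last exact: IHv E.
  split; [by rewrite Ht | exact: unr' | apply: winloss_W].
  by case/and3P: unr.
- rewrite histrel_rcons; move: unr'.
  case: (winloss W _) => w l /= U; apply: add_pair_irr U.
  by split; [exact: IHi | exact: histrel_trans].
Qed.

Lemma play_valid n : valid_history (play n).
Proof. by exists W; split => //; case: (play_inv n). Qed.

Lemma play_unr n : ~~ terminal (play n) ->
  unranked (histrel (play n)) (sigma (play n)).1 (sigma (play n)).2.
Proof. by move=> Ht; apply: Hs => //; exact: play_valid. Qed.

Lemma play_proto n : proto_ranking (histrel (play n)).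
Proof. by split; [case: (play_inv n) | exact: histrel_trans]. Qed.

Lemma play_mono m n : m <= n -> forall a b, histrel (play m) a b -> histrel (play n) a b.
Proof.
elim: n => [|n IH]; first by rewrite leqn0 => /eqP ->.
rewrite leq_eqVlt => /orP [/eqP -> //|/IH H] a b /H {}H.
rewrite playS; case: ifP => // _; rewrite histrel_rcons; exact: add_pair_sub.
Qed.

Lemma play_last n : ~~ terminal (play n) ->
  play n.+1 = rcons (play n) (winloss W (sigma (play n))).
Proof. by rewrite playS => /negbTE ->. Qed.

Lemma play_stuck m n : terminal (play m) -> m <= n -> play n = play m.
Proof.
move=> Ht; elim: n => [|n IH]; first by rewrite leqn0 => /eqP ->.
rewrite leq_eqVlt => /orP [/eqP -> //|/IH E].
by rewrite playS E Ht.
Qed.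

Lemma play_count n :
  terminal (play n) || (n <= #|[set q : X * X | histrel (play n) q.1 q.2]|).
Proof.
elim: n => [|n IH]; first by rewrite leq0n orbT.
rewrite playS; case: ifP => Ht; first by rewrite Ht.
apply/orP; right.
move: IH; rewrite Ht /= => Hc.
apply: leq_ltn_trans Hc _; apply: proper_card; rewrite properE; apply/andP; split.
  by apply/subsetP => r; rewrite !inE histrel_rcons; apply: add_pair_sub.
have unr := winloss_unr (play_unr (negbT Ht)).
apply/subsetPn; exists (winloss W (sigma (play n))).
  by rewrite inE histrel_rcons add_pair_new.
by rewrite inE; case/and3P: unr.
Qed.

Lemma play_total : terminal (play (#|X| * #|X|)).
Proof.
have /orP [//|Hc] := play_count (#|X| * #|X|).
set A := [set q : X * X | _] in Hc.
have EA : A = setT by apply/eqP; rewrite eqEcard subsetT cardsT card_prod.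
apply/forallP => a; apply/forallP => b; apply/implyP => _.
have : (a, b) \in A by rewrite EA inE.
by rewrite inE /= => ->.
Qed.

Lemma outcome_ranking : ranking (outcome sigma W).
Proof.
split; first exact: play_proto.
move=> a b ab; move: play_total => /forallP /(_ a) /forallP /(_ b) /implyP.
by apply.
Qed.

Lemma play_edges n q : q \in play n -> W q.1 q.2 /\ histrel (play n) q.1 q.2.
Proof.
elim: n => [|n IH] //.
rewrite playS; case: ifP => Ht //.
rewrite mem_rcons inE histrel_rcons => /orP [/eqP ->|/IH [Wq Hq]].
- split; last exact: add_pair_new.
  by apply: winloss_W; case/and3P: (play_unr (negbT Ht)).
- by split => //; apply: add_pair_sub.
Qed.

End Play.


Lemma ranking_asym T : ranking T -> forall u v, T u v -> ~~ T v u.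
Proof.
move=> [[Tirr Ttr] _] u v Tuv; apply/negP => Tvu.
by move: (Tirr u); rewrite (Ttr _ _ _ Tuv Tvu).
Qed.

Lemma cover_pair R T W : (forall a b, R a b -> T a b) -> transitive_rel R -> ranking T ->
  (forall a b, T a b -> (forall c, ~~ (T a c && T c b)) -> W a b) ->
  ~~ totalb R -> exists q : X * X, unranked R q.1 q.2 && T q.1 q.2 && W q.1 q.2.
Proof.
move=> RT Rtr HT Tcov ntot.
have [[Tirr Ttr] Ttot] := HT.
pose P n := [exists q : X * X, (unranked R q.1 q.2 && T q.1 q.2) &&
                 (#|[set c | T q.1 c && T c q.2]| == n)].
have exP : exists n, P n.
  move: ntot; rewrite /totalb negb_forall => /existsP [a].
  rewrite negb_forall => /existsP [b]; rewrite negb_imply => /andP [ab nR].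
  have U : unranked R a b by rewrite /unranked ab; move: nR; rewrite negb_or.
  case/orP: (Ttot _ _ ab) => Tab.
  - exists #|[set c | T a c && T c b]|; apply/existsP; exists (a, b).
    by rewrite /= U Tab eqxx.
  - exists #|[set c | T b c && T c a]|; apply/existsP; exists (b, a).
    by rewrite /= unranked_sym U Tab eqxx.
case: (ex_minnP exP) => m /existsP [[a b] /= /andP [/andP [U Tab] /eqP Em]] Hmin.
exists (a, b); rewrite /= U Tab /=; apply: Tcov => // c; apply/negP => /andP [Tac Tcb].
have Tas := ranking_asym HT.
have ranked : forall u v, T u v -> #|[set d | T u d && T d v]| < m ->
    R u v.
  move=> u v Tuv Hlt; case Hu: (unranked R u v).
    have : P #|[set d | T u d && T d v]|.
      by apply/existsP; exists (u, v); rewrite /= Hu Tuv eqxx.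
    by move/Hmin; rewrite leqNgt Hlt.
  move: Hu; rewrite /unranked.
  have -> : (u != v) by apply/eqP => E; move: (Tirr u); rewrite {2}E Tuv.
  case Ruv: (R u v) => //; case Rvu: (R v u) => //= _.
  by move: (Tas _ _ Tuv); rewrite (RT _ _ Rvu).
have Rac : R a c.
  apply: (ranked _ _ Tac); rewrite -Em; apply: proper_card; rewrite properE.
  apply/andP; split.
    by apply/subsetP => d; rewrite !inE => /andP [-> Tdc]; rewrite (Ttr _ _ _ Tdc Tcb).
  apply/subsetPn; exists c; first by rewrite inE Tac Tcb.
  by rewrite inE (negbTE (Tirr c)) andbF.
have Rcb : R c b.
  apply: (ranked _ _ Tcb); rewrite -Em; apply: proper_card; rewrite properE.
  apply/andP; split.
    by apply/subsetP => d; rewrite !inE => /andP [Tcd ->]; rewrite (Ttr _ _ _ Tac Tcd).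
  apply/subsetPn; exists c; first by rewrite inE Tac Tcb.
  by rewrite inE (negbTE (Tirr c)).
by move: U; rewrite /unranked (Rtr _ _ _ Rac Rcb) andbF.
Qed.

Lemma feasible_cover (sigma : history X -> X * X) W T : is_strategy sigma -> tournament W -> ranking T ->
  (forall a b, T a b -> (forall c, ~~ (T a c && T c b)) -> W a b) -> feasible W T.
Proof.
move=> Hs HW HT Tcov.
pose sT := fun h : history X =>
  if [pick q : X * X | unranked (histrel h) q.1 q.2 && T q.1 q.2 && W q.1 q.2] is Some q
  then q else sigma h.
have HsT : is_strategy sT.
  move=> h vh nt; rewrite /sT; case: pickP => [q /andP [/andP [U _] _] //|_].
  exact: Hs.
have [[Tirr Ttr] Ttot] := HT.
have sub : forall n a b, histrel (play sT W n) a b -> T a b.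
  elim=> [|n IH] a b //; rewrite playS; case: ifP => Ht; first exact: IH.
  rewrite histrel_rcons.
  have [q Hq] := cover_pair IH (@histrel_trans (play sT W n)) HT Tcov (negbT Ht).
  rewrite {2}/sT; case: pickP => [q' Hq'|/(_ q)]; last by rewrite Hq.
  move: Hq' => /andP [/andP [_ Tq] Wq].
  have -> : winloss W q' = q' by rewrite /winloss Wq.
  move: a b; apply: tclos_sub => // u v /orP [/IH //|/andP [/eqP -> /eqP ->]] //.
exists sT; split => // a b; apply/idP/idP; first exact: sub.
move=> Tab; have [[irr tr] tot] := outcome_ranking HsT HW.
have ab : a != b by apply/eqP => E; move: (Tirr a); rewrite {2}E Tab.
case/orP: (tot _ _ ab) => // Hba.
by move: (ranking_asym HT Tab); rewrite (sub _ _ _ Hba).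
Qed.


Definition isxy (x y a b : X) := ((a == x) && (b == y)) || ((a == y) && (b == x)).

Lemma ranking_irr T a : ranking T -> ~~ T a a.
Proof. by case=> [[]]. Qed.

Lemma ranking_neq T a b : ranking T -> T a b -> a != b.
Proof. by move=> HT Tab; apply/eqP => E; move: (ranking_irr a HT); rewrite {2}E Tab. Qed.

Lemma ranking_trans T : ranking T -> transitive_rel T.
Proof. by case=> [[]]. Qed.

Lemma ranking_tot T a b : ranking T -> a != b -> T a b || T b a.
Proof. by case=> _ Tt; apply: Tt. Qed.

Lemma swapC C x y w l : ranking C -> C x y -> (forall z, ~~ (C x z && C z y)) ->
  (w = x /\ l = y) \/ (w = y /\ l = x) ->
  exists C', [/\ ranking C', C' w l & forall a b, ~~ isxy x y a b -> C' a b = C a b].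
Proof.
move=> HC Cxy adj [[-> ->]|[-> ->]]; first by exists C; split.
have xy : x != y := ranking_neq HC Cxy.
have Cas := ranking_asym HC.
have Ctr := ranking_trans HC.
pose C' a b := if isxy x y a b then (a == y) && (b == x) else C a b.
have char : forall u v, C' u v = ((u == y) && (v == x)) || (~~ isxy x y u v && C u v).
  move=> u v; rewrite /C'; case: ifP => H /=; first by rewrite orbF.
  by move: H; rewrite /isxy => /norP [_ /negbTE ->].
exists C'; split; last by move=> a b /negbTE H; rewrite /C' H.
- split; first split.
  + move=> a; have H : isxy x y a a = false.
      apply/negP; rewrite /isxy.
      by case/orP => /andP [/eqP Ea /eqP Eb]; move: xy; rewrite -Ea -Eb eqxx.
    by rewrite /C' H (ranking_irr _ HC).
  + move=> a b c; rewrite !char.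
    case/orP => [/andP [/eqP -> /eqP ->]|/andP [nab Cab]];
      case/orP => [/andP [/eqP E /eqP ->]|/andP [nbc Cbc]].
    * by move: xy; rewrite E eqxx.
    * have cx : c != x by rewrite eq_sym; exact: (ranking_neq HC Cbc).
      have cy : c != y by apply/eqP => E; move: nbc; rewrite E /isxy !eqxx.
      apply/orP; right; rewrite /isxy (negbTE cx) (negbTE cy) eq_sym (negbTE xy) /=.
      case/orP: (ranking_tot HC cy) => [Ccy|->]; last by rewrite ?andbF ?andbT.
      by move: (adj c); rewrite Cbc Ccy.
    * move: Cab nab; rewrite E => Cab nab.
      have ay : a != y by exact: (ranking_neq HC Cab).
      have ax : a != x by apply/eqP => E'; move: nab; rewrite E' /isxy !eqxx.
      apply/orP; right; rewrite /isxy (negbTE ax) (negbTE ay) (negbTE xy) /=.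
      case/orP: (ranking_tot HC ax) => [->|Cxa]; first by rewrite ?orbT ?andbT.
      by move: (adj a); rewrite Cab Cxa.
    * apply/orP; right; rewrite (Ctr _ _ _ Cab Cbc) andbT.
      apply/negP; rewrite /isxy => /orP [/andP [/eqP Ea /eqP Ec]|/andP [/eqP Ea /eqP Ec]].
      - by move: (adj b); rewrite -Ea -Ec Cab Cbc.
      - by move: (Cas _ _ Cxy); rewrite -Ea -Ec (Ctr _ _ _ Cab Cbc).
  + move=> a b ab; rewrite !char.
    case Hab: (isxy x y a b).
    * move: Hab; rewrite /isxy => /orP [/andP [/eqP -> /eqP ->]|/andP [/eqP -> /eqP ->]].
      - by rewrite !eqxx orbT.
      - by rewrite !eqxx.
    * have Hba : isxy x y b a = false.
        by move: Hab; rewrite /isxy orbC (andbC (b == x)) (andbC (b == y)).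
      rewrite Hba /=; case/orP: (ranking_tot HC ab) => ->; rewrite ?orbT //.
- by rewrite /C' /isxy !eqxx orbT.
Qed.


Section Pref.
Variable pref : rel X.
Hypothesis Hp : ranking pref.

Definition Crel R a b := R a b || (unranked R a b && pref a b).
Definition Kprop R := transitive_rel (Crel R).

Lemma Crel_sub R a b : R a b -> Crel R a b.
Proof. by rewrite /Crel => ->. Qed.

Lemma Crel_inv R a b : pref a b -> Crel R b a -> R b a.
Proof.
move=> pab; rewrite /Crel => /orP [//|/andP [_ pba]].
by move: (ranking_asym Hp pab); rewrite pba.
Qed.

Lemma Crel_ranking R : proto_ranking R -> Kprop R -> ranking (Crel R).
Proof.
move=> [Rirr Rtr] K; split; first split => //.
- by move=> a; rewrite /Crel /unranked eqxx (negbTE (Rirr a)).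
- move=> a b ab; rewrite /Crel.
  case Rab: (R a b); first by [].
  case Rba: (R b a); first by rewrite orbT.
  have ba : b != a by rewrite eq_sym.
  by rewrite /unranked ab ba Rab Rba /=; apply: ranking_tot Hp ab.
Qed.

Lemma K0 : Kprop (fun _ _ => false).
Proof.
move=> a b c; rewrite /Crel /unranked /= !andbT => /andP [_ pab] /andP [_ pbc].
have pac := ranking_trans Hp pab pbc.
by rewrite pac (ranking_neq Hp pac).
Qed.

Lemma orient_cases p : orient pref p = p \/ orient pref p = (p.2, p.1).
Proof. by rewrite /orient; case: ifP; auto. Qed.

Lemma orient_pref p : p.1 != p.2 -> pref (orient pref p).1 (orient pref p).2.
Proof.
move=> d; rewrite /orient; case: ifP => //= H.
by move: (ranking_tot Hp d); rewrite H.
Qed.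

Lemma orient_unr R p : unranked R p.1 p.2 ->
  unranked R (orient pref p).1 (orient pref p).2.
Proof. by case: (orient_cases p) => ->; rewrite // unranked_sym. Qed.

Lemma adj_of_nmnr R p : transitive_rel R -> unranked R p.1 p.2 ->
  ~ misses_opportunity pref R p -> ~ takes_risk pref R p ->
  forall z, ~~ (Crel R (orient pref p).1 z && Crel R z (orient pref p).2).
Proof.
move=> Rtr U nm nr z; apply/negP.
move: (orient_unr U); rewrite /misses_opportunity /takes_risk in nm nr.
move: nm nr; case: (orient pref p) => x y /= nm nr Uxy.
rewrite /Crel => /andP [/orP [Rxz|/andP [Uxz pxz]] /orP [Rzy|/andP [Uzy pzy]]].
- by move: Uxy; rewrite /unranked (Rtr _ _ _ Rxz Rzy) andbF.
- apply: nr; exists z; apply/orP; left.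
  by move: Uzy; rewrite /unranked pzy Rxz => /and3P [_ _ ->].
- apply: nr; exists z; apply/orP; right.
  by move: Uxz; rewrite /unranked pxz Rzy => /and3P [_ _ ->].
- apply: nm; exists z; rewrite pxz pzy.
  by move: Uxz Uzy; rewrite /unranked => /and3P [_ _ ->] /and3P [_ _ ->].
Qed.

Lemma err_between R p : unranked R p.1 p.2 ->
  misses_opportunity pref R p \/ takes_risk pref R p ->
  exists z, Crel R (orient pref p).1 z && Crel R z (orient pref p).2.
Proof.
move=> U; move: (orient_unr U); rewrite /misses_opportunity /takes_risk.
case: (orient pref p) => x y /= Uxy.
have mk : forall u v, pref u v -> ~~ R v u -> Crel R u v.
  move=> u v puv nRvu; rewrite /Crel /unranked puv nRvu (ranking_neq Hp puv) /= andbT.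
  by case: (R u v).
case => [[z /and4P [pxz pzy nRyz nRzx]]|[z /orP [/and3P [pzy Rxz nRyz]|/and3P [pxz Rzy nRzx]]]];
  exists z.
- by apply/andP; split; apply: mk.
- by apply/andP; split; [apply: Crel_sub | apply: mk].
- by apply/andP; split; [apply: mk | apply: Crel_sub].
Qed.


Lemma step_K R x y w l : proto_ranking R -> Kprop R -> pref x y -> unranked R x y ->
  (forall z, ~~ (Crel R x z && Crel R z y)) ->
  (w = x /\ l = y) \/ (w = y /\ l = x) ->
  Kprop (add_pair R (w, l)) /\
  (forall a b, pref a b -> add_pair R (w, l) b a -> R b a \/ (b = w /\ a = l)).
Proof.
move=> [Rirr Rtr] K pxy Uxy adj wl.
have HC := Crel_ranking (conj Rirr Rtr) K.
have Cxy : Crel R x y by rewrite /Crel Uxy pxy orbT.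
have [C' [HC' C'wl C'E]] := swapC HC Cxy adj wl.
have Uwl : unranked R w l by case: wl => [[-> ->]|[-> ->]]; rewrite // unranked_sym.
set R' := add_pair R (w, l).
have R'wl : R' w l := add_pair_new R (w, l).
have isxy_wl : forall a b, isxy x y a b -> (a = w /\ b = l) \/ (a = l /\ b = w).
  move=> a b; rewrite /isxy => /orP [] /andP [/eqP -> /eqP ->];
    case: wl => [[-> ->]|[-> ->]]; auto.
have isxy_R' : forall a b, isxy x y a b -> R' a b || R' b a.
  by move=> a b /isxy_wl [[-> ->]|[-> ->]]; rewrite R'wl ?orbT.
have nxy : forall a b, R a b -> ~~ isxy x y a b.
  move=> a b Rab; apply/negP; rewrite /isxy => /orP [] /andP [/eqP Ea /eqP Eb];
    move: Uxy; rewrite /unranked -Ea -Eb Rab ?andbF //.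
have RC' : forall a b, R a b -> C' a b.
  by move=> a b Rab; rewrite C'E ?nxy //; apply: Crel_sub.
have Ctr := ranking_trans HC'.
have R'C' : forall a b, R' a b -> C' a b.
  move=> a b; rewrite /R' add_pairE // => /orP [/RC' //|/andP [Haw Hlb]].
  case/orP: Haw => [/eqP ->|/RC' Caw]; case/orP: Hlb => [/eqP <-|/RC' Clb] //.
  - exact: Ctr C'wl Clb.
  - exact: Ctr Caw C'wl.
  - exact: Ctr (Ctr _ _ _ Caw C'wl) Clb.
have Unr : forall a b, a != b -> ~~ R' a b -> ~~ R' b a ->
    unranked R a b && ~~ isxy x y a b.
  move=> a b ab n1 n2.
  have -> : ~~ isxy x y a b by apply/negP => /isxy_R'; rewrite (negbTE n1) (negbTE n2).
  rewrite /unranked ab andbT /=; apply/andP; split; apply/negP => H.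
  - by move: n1; rewrite /R' add_pair_sub.
  - by move: n2; rewrite /R' add_pair_sub.
have CR'E : forall a b, Crel R' a b = C' a b.
  move=> a b; apply/idP/idP.
  - rewrite /Crel => /orP [/R'C' //|/andP [U' pab]].
    move: U'; rewrite /unranked => /and3P [ab n1 n2].
    case/andP: (Unr _ _ ab n1 n2) => U nab.
    by rewrite C'E // /Crel U pab orbT.
  - move=> C'ab; rewrite /Crel; case R'ab: (R' a b) => //=.
    have ab : a != b by apply: ranking_neq HC' C'ab.
    case R'ba: (R' b a).
      by move: (ranking_asym HC' C'ab); rewrite (R'C' _ _ R'ba).
    have [U nab] := andP (Unr _ _ ab (negbT R'ab) (negbT R'ba)).
    rewrite /unranked ab R'ab R'ba /=.
    move: C'ab; rewrite C'E // /Crel => /orP [Rab|/andP [_ //]].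
    by move: U; rewrite /unranked Rab andbF.
split.
- by move=> a b c; rewrite !CR'E; apply: Ctr.
- move=> a b pab R'ba; have C'ba := R'C' _ _ R'ba.
  case: (boolP (isxy x y b a)) => [/isxy_wl [[-> ->]|[Eb Ea]]|nba]; first by right.
  + by move: (ranking_asym HC' C'wl); rewrite -Eb -Ea C'ba.
  + by left; rewrite C'E // in C'ba; apply: Crel_inv pab C'ba.
Qed.

End Pref.


Lemma isxy_sym x y a b : isxy x y a b = isxy x y b a.
Proof. by rewrite /isxy orbC andbC [(b == y) && _]andbC. Qed.

Section Main.
Variable pref : rel X.
Hypothesis Hp : ranking pref.
Variable sigma : history X -> X * X.
Hypothesis Hs : is_strategy sigma.

Lemma play_step_K W : tournament W -> forall n,
  Kprop pref (histrel (play sigma W n)) -> ~~ terminal (play sigma W n) ->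
  ~ misses_opportunity pref (histrel (play sigma W n)) (sigma (play sigma W n)) ->
  ~ takes_risk pref (histrel (play sigma W n)) (sigma (play sigma W n)) ->
  Kprop pref (histrel (play sigma W n.+1)) /\
  (forall a b, pref a b -> histrel (play sigma W n.+1) b a ->
     histrel (play sigma W n) b a \/ W b a).
Proof.
move=> HW n K nt nm nr.
have U := play_unr Hs HW nt.
have adj := adj_of_nmnr (@histrel_trans (play sigma W n)) U nm nr.
have Uo := orient_unr pref U.
have d : (sigma (play sigma W n)).1 != (sigma (play sigma W n)).2 by case/and3P: U.
have po := orient_pref Hp d.
rewrite play_last // histrel_rcons.
have Wwl := winloss_W HW d.
have wl : ((winloss W (sigma (play sigma W n))).1 = (orient pref (sigma (play sigma W n))).1 /\
           (winloss W (sigma (play sigma W n))).2 = (orient pref (sigma (play sigma W n))).2) \/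
          ((winloss W (sigma (play sigma W n))).1 = (orient pref (sigma (play sigma W n))).2 /\
           (winloss W (sigma (play sigma W n))).2 = (orient pref (sigma (play sigma W n))).1).
  by case: (winloss_cases W (sigma (play sigma W n))) => ->;
     case: (orient_cases pref (sigma (play sigma W n))) => ->; auto.
move: Wwl wl; case: (winloss W (sigma (play sigma W n))) => w l /= Wwl wl.
have [K' Hinv] := step_K Hp (play_proto Hs HW n) K po Uo adj wl.
split => // a b pab /(Hinv _ _ pab) [|[-> ->]]; auto.
Qed.

Definition Inv W R := Kprop pref R /\ (forall a b, pref a b -> R b a -> W b a).

Lemma inv_play W : tournament W -> never_misses pref sigma -> never_risks pref sigma ->
  forall n, Inv W (histrel (play sigma W n)).
Proof.
move=> HW nm nr; elim=> [|n [K IH]]; first by split => //; exact: K0 Hp.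
case: (boolP (terminal (play sigma W n))) => nt.
  by rewrite playS nt; split.
have onp : on_path sigma (play sigma W n).
  by split => //; exists W; split => //; exists n.
have [K' H'] := play_step_K HW K nt (nm _ onp) (nr _ onp).
split => // a b pab /(H' _ _ pab) [/(IH _ _ pab)|] //.
Qed.

Lemma unimp_of_inv W : tournament W ->
  (forall a b, pref a b -> outcome sigma W b a -> W b a) ->
  unimprovable pref W (outcome sigma W).
Proof.
move=> HW Hinv R' [s' [Hs' E']] HR' Hal.
have HO := outcome_ranking Hs HW.
have [[Oirr Otr] Otot] := HO.
have [Wtot Wasym] := HW.
have sub : forall a b, histrel (play s' W (#|X| * #|X|)) a b -> outcome sigma W a b.
  apply: histrel_sub => // q /(play_edges Hs' HW) [Wq Hq].
  have R'q : R' q.1 q.2 by rewrite -E'.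
  apply/negPn/negP => nO.
  have d : q.1 != q.2.
    by apply/eqP => E; move: Wq (Wasym _ _ Wq); rewrite E => ->.
  have Oqq : outcome sigma W q.2 q.1 by move: (Otot _ _ d); rewrite (negbTE nO).
  case/orP: (ranking_tot Hp d) => pq.
  - by move: (Wasym _ _ Wq); rewrite (Hinv _ _ pq Oqq).
  - by move: (ranking_asym HR' R'q); rewrite (Hal _ _ pq Oqq).
move=> a b; apply/idP/idP => H.
- by move: H; rewrite -(E' a b) => H; exact: sub H.
- have ab : a != b by apply: ranking_neq HO H.
  case/orP: (ranking_tot HR' ab) => // R'ba.
  have : outcome sigma W b a by apply: sub; rewrite /outcome in E'; rewrite E'.
  by move: (ranking_asym HO H) => /negbTE ->.
Qed.


Definition noerr_at W k :=
  ~ misses_opportunity pref (histrel (play sigma W k)) (sigma (play sigma W k)) /\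
  ~ takes_risk pref (histrel (play sigma W k)) (sigma (play sigma W k)).

Lemma K_play W : tournament W -> forall n,
  (forall k, k < n -> ~~ terminal (play sigma W k) -> noerr_at W k) ->
  Kprop pref (histrel (play sigma W n)).
Proof.
move=> HW; elim=> [|n IH] H; first exact: K0 Hp.
have K : Kprop pref (histrel (play sigma W n)).
  by apply: IH => k kn; apply: H; apply: leqW.
case: (boolP (terminal (play sigma W n))) => nt; first by rewrite playS nt.
have [nm nr] := H n (ltnSn n) nt.
by case: (play_step_K HW K nt nm nr).
Qed.

Lemma noerr (rf : regret_free pref sigma) W0 : tournament W0 -> forall n,
  ~~ terminal (play sigma W0 n) -> noerr_at W0 n.
Proof.
move=> HW0; elim/ltn_ind => n IH nt.
have K := K_play HW0 IH.
rewrite /noerr_at.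
set h := play sigma W0 n in nt K *.
set R := histrel h in K *.
suff : ~ (misses_opportunity pref R (sigma h) \/ takes_risk pref R (sigma h)) by tauto.
move=> err.
have U : unranked R (sigma h).1 (sigma h).2 := play_unr Hs HW0 nt.
have [z Hz] := err_between Hp U err.
have d : (sigma h).1 != (sigma h).2 by case/and3P: U.
have pxy := orient_pref Hp d.
have Uxy := orient_unr pref U.
set x := (orient pref (sigma h)).1 in Hz pxy Uxy.
set y := (orient pref (sigma h)).2 in Hz pxy Uxy.
have xy : x != y by case/and3P: Uxy.
have HR := play_proto Hs HW0 n.
have HC := Crel_ranking Hp HR K.
set C := Crel pref R in HC.
have Cxy : C x y by rewrite /C /Crel Uxy pxy orbT.
pose W' a b := if isxy x y a b then (a == y) && (b == x) else C a b.
have W'yx : W' y x by rewrite /W' /isxy !eqxx orbT.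
have W'xy : W' x y = false.
  by rewrite /W' /isxy !eqxx /= (negbTE xy).
have HW' : tournament W'.
  split.
  - move=> a b ab; rewrite /W' isxy_sym; case: ifP => Hab; last exact: ranking_tot HC ab.
    move: Hab; rewrite /isxy => /orP [] /andP [/eqP -> /eqP ->]; by rewrite !eqxx ?orbT.
  - move=> a b; rewrite /W' isxy_sym; case: ifP => Hab; last first.
      by move=> H; apply: (ranking_asym HC H).
    by move=> /andP [/eqP Ea /eqP Eb]; rewrite Ea Eb (negbTE xy).
have nxy : forall a b, R a b -> ~~ isxy x y a b.
  move=> a b Rab; apply/negP; rewrite /isxy => /orP [] /andP [/eqP Ea /eqP Eb];
    move: Uxy; rewrite /unranked -Ea -Eb Rab ?andbF //.
have agree : forall k, k <= n -> play sigma W' k = play sigma W0 k.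
  elim=> [|k IHk] kn //.
  rewrite !playS IHk ?(ltnW kn) //; case: ifP => ntk //; congr rcons.
  have dp := play_unr Hs HW0 (negbT ntk).
  have dp' : (sigma (play sigma W0 k)).1 != (sigma (play sigma W0 k)).2 by case/and3P: dp.
  have Rq : R (winloss W0 (sigma (play sigma W0 k))).1 (winloss W0 (sigma (play sigma W0 k))).2.
    apply: (play_mono kn); rewrite playS ntk histrel_rcons; exact: add_pair_new.
  have HWq : W' (winloss W0 (sigma (play sigma W0 k))).1 (winloss W0 (sigma (play sigma W0 k))).2.
    by rewrite /W' (negbTE (nxy _ _ Rq)); apply: Crel_sub.
  case: (HW') => _ W'as.
  move: HWq; rewrite /winloss; case: (W0 _ _) => /= HWq; first by rewrite HWq.
  by rewrite (negbTE (W'as _ _ HWq)).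
have hE : play sigma W' n = h := agree n (leqnn n).
have nN : n < #|X| * #|X|.
  rewrite ltnNge; apply/negP => Nn; move: nt.
  by rewrite /h (play_stuck (play_total Hs HW0) Nn) (play_total Hs HW0).
have ntW' : ~~ terminal (play sigma W' n) by rewrite hE.
have Elast : play sigma W' n.+1 = rcons h (winloss W' (sigma h)).
  by rewrite play_last // hE.
have wl' : winloss W' (sigma h) = (y, x).
  case: (orient_cases pref (sigma h)) => Eo.
  - have ex : x = (sigma h).1 by rewrite /x Eo.
    have ey : y = (sigma h).2 by rewrite /y Eo.
    by rewrite /winloss -ex -ey W'xy.
  - have ex : x = (sigma h).2 by rewrite /x Eo.
    have ey : y = (sigma h).1 by rewrite /y Eo.
    by rewrite /winloss -ex -ey W'yx ex ey; case: (sigma h).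
have Oyx : outcome sigma W' y x.
  rewrite /outcome; apply: (play_mono nN).
  by rewrite Elast histrel_rcons wl'; exact: (add_pair_new R (y, x)).
have RO : forall a b, R a b -> outcome sigma W' a b.
  move=> a b Rab; rewrite /outcome; apply: (play_mono (ltnW nN)).
  by rewrite hE.
have HO := outcome_ranking Hs HW'.
have feas : feasible W' C.
  apply: (feasible_cover Hs HW' HC) => a b Cab ncov.
  rewrite /W'; case: ifP => // Hab; exfalso.
  move: Hab; rewrite /isxy => /orP [] /andP [/eqP Ea /eqP Eb].
  - by move: (ncov z); rewrite Ea Eb Hz.
  - by move: (ranking_asym HC Cxy); rewrite -Ea -Eb Cab.
have al : more_aligned pref C (outcome sigma W').
  move=> a b pab Oab; apply/negPn/negP => nC.
  have ab := ranking_neq Hp pab.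
  have Cba : C b a by move: (ranking_tot HC ab); rewrite (negbTE nC).
  have Rba := Crel_inv Hp pab Cba.
  by move: (ranking_asym HO Oab); rewrite (RO _ _ Rba).
have := rf W' HW' C feas HC al y x.
by rewrite Oyx; move: (ranking_asym HC Cxy) => /negbTE ->.
Qed.

End Main.

End Proof.

Theorem theorem3 (X : finType) (pref : rel X) (sigma : history X -> X * X) :
  ranking pref -> is_strategy sigma ->
  (regret_free pref sigma <-> never_misses pref sigma /\ never_risks pref sigma).
Proof.
move=> Hp Hs; split.
- move=> rf.
  have H : forall h, on_path sigma h ->
      ~ misses_opportunity pref (histrel h) (sigma h) /\ ~ takes_risk pref (histrel h) (sigma h).
    move=> h [nt [W [HW [n E]]]]; subst h.
    exact: (noerr Hp Hs rf HW nt).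
  by split => h /H [].
- move=> [nm nr] W HW; apply: (unimp_of_inv Hp Hs HW) => a b pab Oba.
  by case: (inv_play Hp Hs HW nm nr (#|X| * #|X|)) => _ /(_ a b pab Oba).
Qed.
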